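(* In the Setting below, no test $S\in\mathcal{T}\setminus\mathcal{F}$ is simultaneously a $C_i$-test and a $C_j$-test for two distinct indices $i\neq j$.
   Context: A test $T$ on $[n]$ separates $i\neq j$ if $|\{i,j\}\cap T|=1$. The classes induced by a collection $\mathcal{T}'$ of tests are the equivalence classes of the relation ''$i,j$ are not separated by any test of $\mathcal{T}'$''. Setting: $\mathcal{T}$ is a collection of distinct tests on $[n]$ that is a test cover (separates every pair of distinct items), and $\mathcal{F}\subseteq\mathcal{T}$ has the property that for every $T\in\mathcal{T}\setminus\mathcal{F}$, $\mathcal{F}\cup\{T\}$ induces at most one more class than $\mathcal{F}$, and for every two tests $T,T'\in\mathcal{T}\setminus\mathcal{F}$, $\mathcal{F}\cup\{T,T'\}$ induces at most two more classes than $\mathcal{F}$. Let $C_1,\dots,C_l$ be the classes induced by $\mathcal{F}$. For $C\subseteq[n]$, a test $S\in\mathcal{T}$ is a $C$-test if $S\cap C\neq\emptyset$ and $C\setminus S\neq\emptyset$. *)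

(* Defs.v *)
From mathcomp Require Import all_boot.
Set Implicit Arguments. Unset Strict Implicit. Unset Printing Implicit Defensive.

(* Items are 'I_n; a test is a subset of 'I_n; a collection of (distinct)
   tests is a {set {set 'I_n}}. *)

Definition separates n (S : {set 'I_n}) (i j : 'I_n) : bool :=
  (i \in S) != (j \in S).

Definition unseparated n (Tc : {set {set 'I_n}}) (i j : 'I_n) : bool :=
  [forall S in Tc, ~~ separates S i j].

Definition classes n (Tc : {set {set 'I_n}}) : {set {set 'I_n}} :=
  [set [set j | unseparated Tc i j] | i : 'I_n].

Definition test_cover n (Tc : {set {set 'I_n}}) : Prop :=
  forall i j : 'I_n, i != j -> exists2 S, S \in Tc & separates S i j.

Definition C_test n (C S : {set 'I_n}) : bool :=
  (S :&: C != set0) && (C :\: S != set0).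

(* Main.v *)
Require Import Defs.
From mathcomp Require Import all_boot.
From mathcomp Require Import zify.
Set Implicit Arguments. Unset Strict Implicit.

Section Aux.
Variable n : nat.
Implicit Types (Tc : {set {set 'I_n}}) (i j k : 'I_n).

Definition cl Tc i := [set j | unseparated Tc i j].

Lemma unsepP Tc i j : reflect (forall S, S \in Tc -> (i \in S) = (j \in S)) (unseparated Tc i j).
Proof.
apply: (iffP forall_inP) => H S /H; rewrite /separates; first by move/negbNE/eqP.
by move=> ->; rewrite eqxx.
Qed.

Lemma unsep_refl Tc i : unseparated Tc i i.
Proof. by apply/unsepP. Qed.

Lemma unsep_sym Tc i j : unseparated Tc i j -> unseparated Tc j i.
Proof. by move/unsepP=> H; apply/unsepP=> S /H ->. Qed.

Lemma unsep_trans Tc i j k : unseparated Tc i j -> unseparated Tc j k -> unseparated Tc i k.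
Proof. by move/unsepP=> H1 /unsepP H2; apply/unsepP=> S HS; rewrite H1 ?H2. Qed.

Lemma cl_eq Tc i j : (cl Tc i == cl Tc j) = unseparated Tc i j.
Proof.
apply/eqP/idP=> [E|H].
  have : j \in cl Tc j by rewrite inE unsep_refl.
  by rewrite -E inE.
apply/setP=> x; rewrite !inE; apply/idP/idP=> Hx.
  exact: (unsep_trans (unsep_sym H) Hx).
exact: (unsep_trans H Hx).
Qed.

Lemma unsepU S Tc i j : unseparated (S |: Tc) i j = ~~ separates S i j && unseparated Tc i j.
Proof.
apply/unsepP/andP=> [H|[H1 /unsepP H2] S']; last first.
  rewrite in_setU1 => /orP[/eqP->|/H2//]; move: H1; rewrite /separates negbK => /eqP; done.
split; first by rewrite /separates (H S) ?eqxx // setU11.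
by apply/unsepP=> S' HS'; apply: H; rewrite in_setU1 HS' orbT.
Qed.

Lemma classesE Tc : classes Tc = [set cl Tc i | i : 'I_n].
Proof. by []. Qed.

End Aux.

Theorem mainTheorem9 (n : nat) (T F : {set {set 'I_n}}) :
  test_cover T ->
  F \subset T ->
  (forall S, S \in T :\: F -> #|classes (S |: F)| <= #|classes F| + 1) ->
  (forall S S', S \in T :\: F -> S' \in T :\: F -> S != S' ->
     #|classes (S |: (S' |: F))| <= #|classes F| + 2) ->
  forall S, S \in T :\: F ->
  forall Ci Cj, Ci \in classes F -> Cj \in classes F -> Ci != Cj ->
  ~ (C_test Ci S && C_test Cj S).
Proof.
move=> _ _ H1 _ S HS Ci Cj /imsetP[c _ ->] /imsetP[d _ ->] Hne /andP[].
rewrite /C_test => /andP[/set0Pn[i1 Hi1] /set0Pn[i2 Hi2]] /andP[/set0Pn[j1 Hj1] /set0Pn[j2 Hj2]].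
move: Hi1 Hi2 Hj1 Hj2; rewrite !inE => /andP[i1S ci1] /andP[i2S ci2] /andP[j1S dj1] /andP[j2S dj2].
have H := H1 S HS.
set g := cl F. set g' := cl (S |: F).
have Eg : forall x y, g x = g y -> g' x = g' y -> False -> True by [].
have gi : g i1 = g i2.
  apply/eqP; rewrite cl_eq; exact: unsep_trans (unsep_sym ci1) ci2.
have gj : g j1 = g j2.
  apply/eqP; rewrite cl_eq; exact: unsep_trans (unsep_sym dj1) dj2.
have gij : forall x y, unseparated F c x -> unseparated F d y -> g x != g y.
  move=> x y cx dy; apply: contra Hne; rewrite !cl_eq => xy.
  exact: unsep_trans cx (unsep_trans xy (unsep_sym dy)).
have sep' : forall x y, g x != g y -> g' x != g' y.
  move=> x y; apply: contra; rewrite !cl_eq unsepU; by case/andP.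
have sepS : forall x y, x \in S -> y \notin S -> g' x != g' y.
  move=> x y xS yS; rewrite cl_eq unsepU /separates xS (negbTE yS) //.
set A := classes (S |: F).
set X := [set g' i2; g' j2].
set B := A :\: X.
have XA : X \subset A by apply/subsetP=> D; rewrite !inE => /orP[]/eqP->; apply: imset_f.
have cX : #|X| = 2 by rewrite cards2 (sep' _ _ (gij _ _ ci2 dj2)).
have cB : #|B| = #|A| - 2 by rewrite cardsD (setIidPr XA) cX.
pose h (D : {set 'I_n}) := if [pick x in D] is Some x then g x else set0.
have hg : forall x, h (g' x) = g x.
  move=> x; rewrite /h; case: pickP => [y|]; last by move/(_ x); rewrite inE unsep_refl.
  rewrite inE unsepU => /andP[_ xy]; apply/eqP; rewrite eq_sym cl_eq //.
have sub : classes F \subset h @: B.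
  apply/subsetP=> C /imsetP[k _ ->]; change (g k \in h @: B).
  have [kX|kX] := boolP (g' k \in X).
    move: kX; rewrite !inE => /orP[] /eqP E.
      have gk : g k = g i2 by rewrite -hg E hg.
      rewrite gk -gi -hg; apply: imset_f; rewrite !inE imset_f // andbT negb_or.
      by rewrite (sepS _ _ i1S i2S) sep' // (gij _ _ ci1 dj2).
    have gk : g k = g j2 by rewrite -hg E hg.
    rewrite gk -gj -hg; apply: imset_f; rewrite !inE imset_f // andbT negb_or.
    by rewrite (sepS _ _ j1S j2S) sep' // eq_sym (gij _ _ ci2 dj1).
  by rewrite -hg; apply: imset_f; rewrite in_setD kX imset_f.
have := subset_leq_card sub; have := leq_imset_card h B.
have := subset_leq_card XA; rewrite cX cB -/A => a b e.
move: H a (leq_trans e b); rewrite -/A; move: #|A| #|classes F| => x y h1 h2; rewrite leq_subRL // => h3; have := leq_trans h3 h1; by rewrite addnC leq_add2l.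
Qed.
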